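(* Let $A$ be a finite, connected, directly irreducible poset. Let $B$ and $P$ be posets (not assumed finite) with $P\neq\emptyset$. If $A\cong\mathcal C(B^P)$, then $P$ is finite and connected, and $B$ is finite, connected, and directly irreducible.
   Context: For posets $P$ and $Q$, $P^Q$ denotes the set of order-preserving maps $Q\to P$, ordered pointwise: $f\le g$ iff $f(q)\le g(q)$ in $P$ for all $q\in Q$. For elements $x,y$ of a poset, $x\equiv y$ means $x$ and $y$ lie in the same connected component. $\mathcal D(P^Q)$ is the set of $g\in P^Q$ that are constant on each connected component of $Q$. For $Q\neq\emptyset$, $\mathcal C(P^Q)=\{f\in P^Q\mid f\equiv g \text{ in } P^Q \text{ for some } g\in\mathcal D(P^Q)\}$, viewed as a subposet of $P^Q$. A poset $P$ is directly irreducible if $|P|\neq 1$ and whenever $P\cong S\times T$ for posets $S,T$, then $|S|=1$ or $|T|=1$. *)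

(* Defs.v *)
From Stdlib Require Import List Relations FunctionalExtensionality ProofIrrelevance.

Record Poset := {
  carrier :> Type;
  le : carrier -> carrier -> Prop;
  le_refl : forall x, le x x;
  le_antisym : forall x y, le x y -> le y x -> x = y;
  le_trans : forall x y z, le x y -> le y z -> le x z
}.
Arguments le {p} _ _.

Definition sub_carrier (P : Poset) (S : P -> Prop) := {x : P | S x}.

Lemma sub_antisym (P : Poset) (S : P -> Prop) (x y : sub_carrier P S) :
  le (proj1_sig x) (proj1_sig y) -> le (proj1_sig y) (proj1_sig x) -> x = y.
Proof.
  destruct x as [x hx], y as [y hy]; simpl; intros h1 h2.
  pose proof (le_antisym P x y h1 h2) as e; subst y.
  f_equal; apply proof_irrelevance.
Qed.

Definition SubPoset (P : Poset) (S : P -> Prop) : Poset :=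
  {| carrier := sub_carrier P S;
     le := fun x y => le (proj1_sig x) (proj1_sig y);
     le_refl := fun x => le_refl P (proj1_sig x);
     le_antisym := sub_antisym P S;
     le_trans := fun x y z => le_trans P (proj1_sig x) (proj1_sig y) (proj1_sig z) |}.

Definition monotone (Q P : Poset) (f : Q -> P) : Prop :=
  forall q q', le q q' -> le (f q) (f q').

(* P^Q : order-preserving maps Q -> P, ordered pointwise *)
Definition fun_carrier (P Q : Poset) := {f : Q -> P | monotone Q P f}.

Lemma fun_antisym (P Q : Poset) (f g : fun_carrier P Q) :
  (forall q, le (proj1_sig f q) (proj1_sig g q)) ->
  (forall q, le (proj1_sig g q) (proj1_sig f q)) -> f = g.
Proof.
  destruct f as [f hf], g as [g hg]; simpl; intros h1 h2.
  assert (e : f = g).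
  { apply functional_extensionality; intro q; apply le_antisym; auto. }
  subst g; f_equal; apply proof_irrelevance.
Qed.

Definition FunPoset (P Q : Poset) : Poset :=
  {| carrier := fun_carrier P Q;
     le := fun f g => forall q, le (proj1_sig f q) (proj1_sig g q);
     le_refl := fun f q => le_refl P (proj1_sig f q);
     le_antisym := fun_antisym P Q;
     le_trans := fun f g h H1 H2 q =>
       le_trans P _ _ _ (H1 q) (H2 q) |}.

(* x ≡ y : same connected component (equivalence closure of comparability) *)
Definition same_comp (P : Poset) : P -> P -> Prop :=
  clos_refl_sym_trans P (@le P).

Definition in_D (P Q : Poset) (g : FunPoset P Q) : Prop :=
  forall q q', same_comp Q q q' -> proj1_sig g q = proj1_sig g q'.

Definition CPoset (P Q : Poset) : Poset :=
  SubPoset (FunPoset P Q)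
    (fun f => exists g, in_D P Q g /\ same_comp (FunPoset P Q) f g).

Definition ProdPoset (S T : Poset) : Poset.
Proof.
  refine {| carrier := (S * T)%type;
            le := fun x y => le (fst x) (fst y) /\ le (snd x) (snd y) |}.
  - intros [a b]; split; apply le_refl.
  - intros [a b] [c d] [h1 h2] [h3 h4]; simpl in *.
    f_equal; apply le_antisym; assumption.
  - intros [a b] [c d] [e f] [h1 h2] [h3 h4]; simpl in *.
    split; eapply le_trans; eassumption.
Defined.

Definition poset_iso (S T : Poset) : Prop :=
  exists f : S -> T,
    (forall x y, le x y <-> le (f x) (f y)) /\ (forall y, exists x, f x = y).

Definition finite_poset (P : Poset) : Prop := exists l : list P, forall x, In x l.

Definition singleton_poset (P : Poset) : Prop := exists x : P, forall y : P, y = x.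

Definition connected_poset (P : Poset) : Prop :=
  inhabited P /\ forall x y : P, same_comp P x y.

Definition directly_irreducible (P : Poset) : Prop :=
  ~ singleton_poset P /\
  forall S T : Poset, poset_iso P (ProdPoset S T) ->
    singleton_poset S \/ singleton_poset T.

(* Main.v *)
Require Import Defs.
From Stdlib Require Import List Relations FunctionalExtensionality ProofIrrelevance Classical ClassicalEpsilon.

Lemma sig_ext {X : Type} {Q : X -> Prop} (x y : {z | Q z}) : proj1_sig x = proj1_sig y -> x = y.
Proof. destruct x, y; simpl; intros ->; f_equal; apply proof_irrelevance. Qed.

Definition fn {B P : Poset} (x : CPoset B P) : P -> B := proj1_sig (proj1_sig x).

Lemma C_ext {B P : Poset} (x y : CPoset B P) : fn x = fn y -> x = y.
Proof. intro H. apply sig_ext. apply sig_ext. exact H. Qed.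

Lemma mono_comp (X Y : Poset) (h : X -> Y) : monotone X Y h ->
  forall x y, same_comp X x y -> same_comp Y (h x) (h y).
Proof.
  intros Hh x y H; induction H.
  - apply rst_step; auto.
  - apply rst_refl.
  - apply rst_sym; auto.
  - eapply rst_trans; eauto.
Qed.

Definition inC (B P : Poset) (f : FunPoset B P) : Prop :=
  exists g, in_D B P g /\ same_comp (FunPoset B P) f g.

Definition mkC {B P : Poset} (f : FunPoset B P) (H : inC B P f) : CPoset B P :=
  exist _ f H.

Definition constF (B P : Poset) (b : B) : FunPoset B P :=
  exist (fun f : P -> B => monotone P B f) (fun _ => b) (fun q q' _ => le_refl B b).

Lemma const_inC (B P : Poset) (b : B) : inC B P (constF B P b).
Proof. exists (constF B P b); split; [intros q q' _; reflexivity| apply rst_refl]. Qed.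

Definition constC (B P : Poset) (b : B) : CPoset B P := mkC _ (const_inC B P b).

Lemma fn_const B P b q : fn (constC B P b) q = b.
Proof. reflexivity. Qed.

Lemma iso_trans (X Y Z : Poset) : poset_iso X Y -> poset_iso Y Z -> poset_iso X Z.
Proof.
  intros [f [Hf Sf]] [g [Hg Sg]]. exists (fun x => g (f x)); split.
  - intros x y; rewrite Hf, Hg; tauto.
  - intro z; destruct (Sg z) as [y <-]; destruct (Sf y) as [x <-]; eauto.
Qed.

Lemma iso_inj (X Y : Poset) (f : X -> Y) :
  (forall x y, le x y <-> le (f x) (f y)) -> forall x y, f x = f y -> x = y.
Proof.
  intros H x y e; apply le_antisym; apply H; rewrite e; apply le_refl.
Qed.

Lemma iso_singleton (X Y : Poset) : poset_iso X Y -> singleton_poset Y -> singleton_poset X.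
Proof.
  intros [f [Hf Sf]] [y Hy]. destruct (Sf y) as [x _]. exists x; intro z.
  apply (iso_inj X Y f Hf). rewrite (Hy (f z)), (Hy (f x)); reflexivity.
Qed.

Lemma surj_finite (X Y : Type) (f : X -> Y) : (forall y, exists x, f x = y) ->
  (exists l : list X, forall x, In x l) -> exists l : list Y, forall y, In y l.
Proof.
  intros Sf [l Hl]; exists (map f l); intro y; destruct (Sf y) as [x <-]; apply in_map; auto.
Qed.

Lemma inj_finite (X Y : Type) (f : X -> Y) : (forall x y, f x = f y -> x = y) -> inhabited X ->
  (exists l : list Y, forall y, In y l) -> exists l : list X, forall x, In x l.
Proof.
  intros If [x0] [l Hl].
  pose (g := fun y => match excluded_middle_informative (exists x, f x = y) with
                      | left H => proj1_sig (constructive_indefinite_description _ H)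
                      | right _ => x0 end).
  exists (map g l); intro x.
  replace x with (g (f x)). { apply in_map; auto. }
  unfold g; destruct excluded_middle_informative as [H|H].
  - destruct constructive_indefinite_description as [x' e]; simpl; auto.
  - exfalso; apply H; eauto.
Qed.

Definition postF (B S P : Poset) (h : B -> S) (Hh : monotone B S h) (f : FunPoset B P) : FunPoset S P :=
  exist (fun g : P -> S => monotone P S g) (fun q => h (proj1_sig f q))
    (fun q q' e => Hh _ _ (proj2_sig f q q' e)).

Lemma post_inC (B S P : Poset) (h : B -> S) (Hh : monotone B S h) (f : FunPoset B P) :
  inC B P f -> inC S P (postF B S P h Hh f).
Proof.
  intros [g [Dg Cg]]. exists (postF B S P h Hh g); split.
  - intros q q' e; simpl; rewrite (Dg q q' e); reflexivity.
  - apply (mono_comp (FunPoset B P) (FunPoset S P) (postF B S P h Hh)); auto.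
    intros u v H q; simpl; apply Hh; apply H.
Qed.

Definition postC (B S P : Poset) (h : B -> S) (Hh : monotone B S h) (f : CPoset B P) : CPoset S P :=
  mkC _ (post_inC B S P h Hh (proj1_sig f) (proj2_sig f)).

Section Prod.
Variables (B S T P : Poset) (beta : B -> ProdPoset S T) (gam : ProdPoset S T -> B).
Hypothesis Hb : forall x y, le x y <-> le (beta x) (beta y).
Hypothesis Hg : forall y, beta (gam y) = y.

Lemma gam_mono : monotone (ProdPoset S T) B gam.
Proof. intros y y' e; apply Hb; rewrite !Hg; auto. Qed.

Lemma p1_mono : monotone B S (fun b => fst (beta b)).
Proof. intros x y e; apply Hb in e; apply e. Qed.
Lemma p2_mono : monotone B T (fun b => snd (beta b)).
Proof. intros x y e; apply Hb in e; apply e. Qed.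

Definition pairF (u : FunPoset S P) (v : FunPoset T P) : FunPoset B P :=
  exist (fun g : P -> B => monotone P B g) (fun q => gam (proj1_sig u q, proj1_sig v q))
    (fun q q' e => gam_mono (_,_) (_,_) (conj (proj2_sig u q q' e) (proj2_sig v q q' e))).

Lemma pair_inC (u : FunPoset S P) (v : FunPoset T P) : inC S P u -> inC T P v -> inC B P (pairF u v).
Proof.
  intros [gu [Du Cu]] [gv [Dv Cv]]. exists (pairF gu gv); split.
  - intros q q' e; simpl; rewrite (Du q q' e), (Dv q q' e); reflexivity.
  - eapply rst_trans.
    + apply (mono_comp (FunPoset S P) (FunPoset B P) (fun u => pairF u v)); [|exact Cu].
      intros a a' H q; simpl; apply gam_mono; split; [apply H|apply le_refl].
    + apply (mono_comp (FunPoset T P) (FunPoset B P) (fun v => pairF gu v)); [|exact Cv].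
      intros a a' H q; simpl; apply gam_mono; split; [apply le_refl|apply H].
Qed.

Lemma C_prod : poset_iso (CPoset B P) (ProdPoset (CPoset S P) (CPoset T P)).
Proof.
  exists (fun f => (postC B S P _ p1_mono f, postC B T P _ p2_mono f)); split.
  - intros x y; simpl; split.
    + intro H; split; intro q; simpl; apply Hb, H.
    + intros [H1 H2] q; apply Hb; split; [apply H1|apply H2].
  - intros [s t].
    exists (mkC _ (pair_inC (proj1_sig s) (proj1_sig t) (proj2_sig s) (proj2_sig t))).
    f_equal; apply C_ext; apply functional_extensionality; intro q; unfold fn; simpl;
      rewrite Hg; reflexivity.
Qed.
End Prod.

Section Glue.
Variables (B P : Poset) (K : P -> Prop).
Hypothesis HK : forall q q', le q q' -> (K q <-> K q').

Lemma K_comp q q' : same_comp P q q' -> (K q <-> K q').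
Proof. intro H; induction H; firstorder. Qed.

Definition gluef (f g : P -> B) (q : P) : B :=
  if excluded_middle_informative (K q) then f q else g q.

Lemma glue_mono (f g : FunPoset B P) : monotone P B (gluef (proj1_sig f) (proj1_sig g)).
Proof.
  intros q q' e; unfold gluef.
  destruct (excluded_middle_informative (K q)) as [k|k];
  destruct (excluded_middle_informative (K q')) as [k'|k'].
  - apply (proj2_sig f); auto.
  - exfalso; apply k'; apply (HK q q' e); auto.
  - exfalso; apply k; apply (HK q q' e); auto.
  - apply (proj2_sig g); auto.
Qed.

Definition glueF (f g : FunPoset B P) : FunPoset B P := exist _ _ (glue_mono f g).

Lemma glue_inC (f g : FunPoset B P) : inC B P f -> inC B P g -> inC B P (glueF f g).
Proof.
  intros [gf [Df Cf]] [gg [Dg Cg]]. exists (glueF gf gg); split.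
  - intros q q' e; simpl; unfold gluef.
    destruct (excluded_middle_informative (K q)) as [k|k];
    destruct (excluded_middle_informative (K q')) as [k'|k'].
    + apply Df; auto.
    + exfalso; apply k'; apply (K_comp q q' e); auto.
    + exfalso; apply k; apply (K_comp q q' e); auto.
    + apply Dg; auto.
  - eapply rst_trans.
    + apply (mono_comp (FunPoset B P) (FunPoset B P) (fun u => glueF u g)); [|exact Cf].
      intros a a' H q; simpl; unfold gluef; destruct excluded_middle_informative;
        [apply H|apply le_refl].
    + apply (mono_comp (FunPoset B P) (FunPoset B P) (fun v => glueF gf v)); [|exact Cg].
      intros a a' H q; simpl; unfold gluef; destruct excluded_middle_informative;
        [apply le_refl|apply H].
Qed.

Definition glueC (f g : CPoset B P) : CPoset B P :=
  mkC _ (glue_inC _ _ (proj2_sig f) (proj2_sig g)).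

Lemma fn_glue f g q : fn (glueC f g) q = if excluded_middle_informative (K q) then fn f q else fn g q.
Proof. reflexivity. Qed.

Variable b0 : B.
Definition SL := SubPoset (CPoset B P) (fun f => forall q, ~ K q -> fn f q = b0).
Definition SR := SubPoset (CPoset B P) (fun f => forall q, K q -> fn f q = b0).

Lemma glue_iso : poset_iso (CPoset B P) (ProdPoset SL SR).
Proof.
  set (c := constC B P b0).
  assert (h1 : forall f : CPoset B P, forall q, ~ K q -> fn (glueC f c) q = b0).
  { intros f q k; rewrite fn_glue; destruct excluded_middle_informative; tauto. }
  assert (h2 : forall f : CPoset B P, forall q, K q -> fn (glueC c f) q = b0).
  { intros f q k; rewrite fn_glue; destruct excluded_middle_informative; tauto. }
  exists (fun f => ((exist _ (glueC f c) (h1 f) : SL), (exist _ (glueC c f) (h2 f) : SR))).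
  split.
  - intros x y; simpl; split.
    + intro H; split; intro q; simpl; unfold gluef; destruct excluded_middle_informative;
        (apply H || apply le_refl).
    + intros [H1 H2] q. specialize (H1 q); specialize (H2 q); simpl in H1, H2; unfold gluef in H1, H2.
      destruct excluded_middle_informative; auto.
  - intros [[s Hs] [t Ht]].
    exists (glueC s t). f_equal; apply sig_ext; simpl; apply C_ext;
      apply functional_extensionality; intro q; rewrite !fn_glue;
      destruct excluded_middle_informative as [k|k]; auto.
    + symmetry; apply Hs; auto.
    + symmetry; apply Ht; auto.
Qed.
End Glue.

Definition upf (B P : Poset) (bl bh : B) (p q : P) : B :=
  if excluded_middle_informative (le p q) then bh else bl.

Lemma up_mono (B P : Poset) (bl bh : B) (h : le bl bh) (p : P) : monotone P B (upf B P bl bh p).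
Proof.
  intros q q' e; unfold upf.
  destruct (excluded_middle_informative (le p q)) as [k|k];
  destruct (excluded_middle_informative (le p q')) as [k'|k'].
  - apply le_refl.
  - exfalso; apply k'; eapply le_trans; eauto.
  - exact h.
  - apply le_refl.
Qed.

Definition upF B P bl bh h p : FunPoset B P := exist _ _ (up_mono B P bl bh h p).

Lemma up_inC B P bl bh h p : inC B P (upF B P bl bh h p).
Proof.
  exists (constF B P bl); split.
  - intros q q' _; reflexivity.
  - apply rst_sym, rst_step; intro q; simpl; unfold upf; destruct excluded_middle_informative;
      [exact h|apply le_refl].
Qed.

Definition upC B P bl bh h p : CPoset B P := mkC _ (up_inC B P bl bh h p).

Lemma sing_C (S P : Poset) (p0 : P) : singleton_poset (CPoset S P) -> singleton_poset S.
Proof.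
  intros [x Hx]; exists (fn x p0); intro s.
  rewrite <- (Hx (constC S P s)); reflexivity.
Qed.

Theorem lemma6 (A B P : Poset) :
  finite_poset A -> connected_poset A -> directly_irreducible A ->
  inhabited P ->
  poset_iso A (CPoset B P) ->
  finite_poset P /\ connected_poset P /\
  finite_poset B /\ connected_poset B /\ directly_irreducible B.
Proof.
  intros FA CA DA [p0] Iso.
  destruct CA as [[a0] CA'].
  pose proof Iso as Iso'; destruct Iso' as [phi [Hphi Sphi]].
  set (f0 := phi a0). set (b0 := fn f0 p0).
  assert (nsB : ~ singleton_poset B).
  { intros [b Hb]; apply (proj1 DA); apply (iso_singleton A (CPoset B P) Iso).
    exists f0; intro y; apply C_ext; apply functional_extensionality; intro q.
    rewrite (Hb (fn y q)), (Hb (fn f0 q)); reflexivity. }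
  assert (connB : forall b b', same_comp B b b').
  { intros b b'.
    destruct (Sphi (constC B P b)) as [a ea], (Sphi (constC B P b')) as [a' ea'].
    pose (h := fun a => fn (phi a) p0).
    assert (hm : monotone A B h).
    { intros x y e; apply Hphi in e; apply e. }
    pose proof (mono_comp A B h hm a a' (CA' a a')) as Hc.
    unfold h in Hc; rewrite ea, ea' in Hc; exact Hc. }
  assert (strict : exists bl bh : B, le bl bh /\ bl <> bh).
  { apply NNPP; intro H. apply nsB. exists b0; intro y.
    assert (E : forall x y, same_comp B x y -> x = y).
    { intros x z Hc; induction Hc; [apply NNPP; intro; apply H; eauto | reflexivity | congruence | congruence]. }
    apply E, connB. }
  destruct strict as [bl [bh [hle hne]]].
  assert (finC : exists l : list (CPoset B P), forall y, In y l).
  { exact (surj_finite A (CPoset B P) phi Sphi FA). }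
  assert (dirB : directly_irreducible B).
  { split; [exact nsB|]. intros S T [beta [Hb Sb]].
    pose (gam := fun y => proj1_sig (constructive_indefinite_description _ (Sb y))).
    assert (Hg : forall y, beta (gam y) = y).
    { intro y; unfold gam; destruct constructive_indefinite_description; auto. }
    pose proof (iso_trans _ _ _ Iso (C_prod B S T P beta gam Hb Hg)) as I2.
    destruct (proj2 DA _ _ I2) as [H|H]; [left|right]; exact (sing_C _ _ p0 H). }
  split; [|split; [|split; [|split]]].
  - apply (inj_finite P (CPoset B P) (upC B P bl bh hle)).
    + intros p p' e.
      assert (E : forall q, upf B P bl bh p q = upf B P bl bh p' q).
      { intro q; exact (f_equal (fun z => fn z q) e). }
      apply le_antisym.
      * pose proof (E p') as E1; unfold upf in E1.
        destruct (excluded_middle_informative (le p p')); auto.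
        destruct (excluded_middle_informative (le p' p')) as [_|k]; [congruence|].
        exfalso; apply k, le_refl.
      * pose proof (E p) as E1; unfold upf in E1.
        destruct (excluded_middle_informative (le p' p)); auto.
        destruct (excluded_middle_informative (le p p)) as [_|k]; [congruence|].
        exfalso; apply k, le_refl.
    + constructor; exact p0.
    + exact finC.
  - split; [constructor; exact p0|]. intros x y. apply NNPP; intro Hxy.
    pose (K := fun q => same_comp P x q).
    assert (HK : forall q q', le q q' -> (K q <-> K q')).
    { intros q q' e; unfold K; split; intro H.
      - eapply rst_trans; [exact H| apply rst_step; exact e].
      - eapply rst_trans; [exact H| apply rst_sym, rst_step; exact e]. }
    pose proof (iso_trans _ _ _ Iso (glue_iso B P K HK b0)) as I2.
    destruct (proj2 DA _ _ I2) as [[s Hs]|[s Hs]]; apply nsB.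
    + exists (fn (proj1_sig s) x); intro b.
      assert (hh : forall q, ~ K q -> fn (glueC B P K HK (constC B P b) (constC B P b0)) q = b0).
      { intros q k; rewrite fn_glue; destruct excluded_middle_informative; tauto. }
      pose proof (Hs (exist _ _ hh)) as e.
      apply (f_equal (fun z => fn (proj1_sig z) x)) in e; simpl in e.
      etransitivity; [|exact e]; rewrite fn_glue; destruct excluded_middle_informative as [_|k]; [reflexivity|].
      exfalso; apply k; apply rst_refl.
    + exists (fn (proj1_sig s) y); intro b.
      assert (hh : forall q, K q -> fn (glueC B P K HK (constC B P b0) (constC B P b)) q = b0).
      { intros q k; rewrite fn_glue; destruct excluded_middle_informative; tauto. }
      pose proof (Hs (exist _ _ hh)) as e.
      apply (f_equal (fun z => fn (proj1_sig z) y)) in e; simpl in e.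
      etransitivity; [|exact e]; rewrite fn_glue; destruct excluded_middle_informative as [k|_]; [|reflexivity].
      exfalso; apply Hxy; exact k.
  - apply (inj_finite B (CPoset B P) (constC B P)).
    + intros b b' e; exact (f_equal (fun z => fn z p0) e).
    + constructor; exact b0.
    + exact finC.
  - split; [constructor; exact b0|exact connB].
  - exact dirB.
Qed.
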